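(* Let $A$ be a skew brace. If every ideal of $A$ has finite weight, then $\mathrm{Spec}\,A$ with the spectral topology is a Noetherian topological space (its closed subsets satisfy the descending chain condition).
   Context: A (left) skew brace is a triple $(A,+,\circ)$ where $(A,+)$ and $(A,\circ)$ are groups such that $a\circ(b+c)=a\circ b-a+a\circ c$ for all $a,b,c$; common identity $e$. Put $\lambda_a(b)=-a+a\circ b$, $a*b=-a+a\circ b-b$. An ideal is a normal subgroup $I$ of both $(A,+)$ and $(A,\circ)$ with $\lambda_a(I)\subseteq I$ for all $a$. The weight of an ideal (as a skew brace) is the minimal number of elements needed to generate it as an ideal; an ideal has finite weight if it is generated as an ideal by finitely many elements (equivalently, all ideals have finite weight iff every ascending chain of ideals of $A$ stabilizes). For subsets $I,J$, $I*J=\{i*j\mid i\in I,j\in J\}$. A prime ideal is a proper ideal $P$ such that for any subsets $I,J$ of $A$, $I*J\subseteq P$ implies $I\subseteq P$ or $J\subseteq P$; $\mathrm{Spec}\,A$ is the set of prime ideals. The spectral topology on $\mathrm{Spec}\,A$ has closed sets $H(I)=\{P\in\mathrm{Spec}\,A\mid I\subseteq P\}$, $I$ an ideal. *)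

(* Defs.v *)
From Stdlib Require Import List Arith.

Record SkewBrace := {
  sb_carrier :> Type;
  sb_add : sb_carrier -> sb_carrier -> sb_carrier;
  sb_opp : sb_carrier -> sb_carrier;
  sb_e : sb_carrier;                       (* common identity of (A,+) and (A,o) *)
  sb_circ : sb_carrier -> sb_carrier -> sb_carrier;
  sb_cinv : sb_carrier -> sb_carrier;
  sb_addA : forall a b c, sb_add a (sb_add b c) = sb_add (sb_add a b) c;
  sb_add0l : forall a, sb_add sb_e a = a;
  sb_add0r : forall a, sb_add a sb_e = a;
  sb_addNl : forall a, sb_add (sb_opp a) a = sb_e;
  sb_addNr : forall a, sb_add a (sb_opp a) = sb_e;
  sb_circA : forall a b c, sb_circ a (sb_circ b c) = sb_circ (sb_circ a b) c;
  sb_circ1l : forall a, sb_circ sb_e a = a;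
  sb_circ1r : forall a, sb_circ a sb_e = a;
  sb_circVl : forall a, sb_circ (sb_cinv a) a = sb_e;
  sb_circVr : forall a, sb_circ a (sb_cinv a) = sb_e;
  sb_compat : forall a b c,
    sb_circ a (sb_add b c) = sb_add (sb_add (sb_circ a b) (sb_opp a)) (sb_circ a c)
}.

Arguments sb_add {s}. Arguments sb_opp {s}. Arguments sb_e {s}.
Arguments sb_circ {s}. Arguments sb_cinv {s}.

Section Defs.
Variable A : SkewBrace.

Definition sb_lambda (a b : A) : A := sb_add (sb_opp a) (sb_circ a b).
Definition sb_star (a b : A) : A :=
  sb_add (sb_add (sb_opp a) (sb_circ a b)) (sb_opp b).

Definition is_ideal (I : A -> Prop) : Prop :=
  I sb_e /\
  (forall x y, I x -> I y -> I (sb_add x y)) /\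
  (forall x, I x -> I (sb_opp x)) /\
  (forall a x, I x -> I (sb_add (sb_add a x) (sb_opp a))) /\
  (forall x y, I x -> I y -> I (sb_circ x y)) /\
  (forall x, I x -> I (sb_cinv x)) /\
  (forall a x, I x -> I (sb_circ (sb_circ a x) (sb_cinv a))) /\
  (forall a x, I x -> I (sb_lambda a x)).

Definition ideal_gen (X : A -> Prop) (x : A) : Prop :=
  forall J, is_ideal J -> (forall y, X y -> J y) -> J x.

Definition finite_weight (I : A -> Prop) : Prop :=
  exists l : list A, forall x, I x <-> ideal_gen (fun y => In y l) x.

Definition is_prime (P : A -> Prop) : Prop :=
  is_ideal P /\ (exists x, ~ P x) /\
  forall I J : A -> Prop,
    (forall i j, I i -> J j -> P (sb_star i j)) ->
    (forall i, I i -> P i) \/ (forall j, J j -> P j).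

(* Subsets of Spec A are predicates on subsets of A (we only look at their prime members). *)
Definition spec_H (I : A -> Prop) (P : A -> Prop) : Prop :=
  is_prime P /\ forall x, I x -> P x.

Definition spec_closed (C : (A -> Prop) -> Prop) : Prop :=
  exists I, is_ideal I /\ forall P, C P <-> spec_H I P.

Definition spec_noetherian : Prop :=
  forall C : nat -> (A -> Prop) -> Prop,
    (forall n, spec_closed (C n)) ->
    (forall n P, C (S n) P -> C n P) ->
    exists N, forall n, N <= n -> forall P, C n P <-> C N P.

End Defs.

(* Main.v *)
Require Import Defs.
From Stdlib Require Import List Arith Lia.

Lemma inter_ideal (A : SkewBrace) (F : (A -> Prop) -> Prop) :
  (forall P, F P -> is_ideal A P) ->
  is_ideal A (fun x => forall P, F P -> P x).
Proof.
  intros H. unfold is_ideal.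
  repeat split.
  - intros P HP; destruct (H _ HP) as (h1&h2&h3&h4&h5&h6&h7&h8); exact h1.
  - intros x y Hx Hy P HP; destruct (H _ HP) as (h1&h2&h3&h4&h5&h6&h7&h8); apply h2; [apply Hx|apply Hy]; exact HP.
  - intros x Hx P HP; destruct (H _ HP) as (h1&h2&h3&h4&h5&h6&h7&h8); apply h3; apply Hx; exact HP.
  - intros a x Hx P HP; destruct (H _ HP) as (h1&h2&h3&h4&h5&h6&h7&h8); apply h4; apply Hx; exact HP.
  - intros x y Hx Hy P HP; destruct (H _ HP) as (h1&h2&h3&h4&h5&h6&h7&h8); apply h5; [apply Hx|apply Hy]; exact HP.
  - intros x Hx P HP; destruct (H _ HP) as (h1&h2&h3&h4&h5&h6&h7&h8); apply h6; apply Hx; exact HP.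
  - intros a x Hx P HP; destruct (H _ HP) as (h1&h2&h3&h4&h5&h6&h7&h8); apply h7; apply Hx; exact HP.
  - intros a x Hx P HP; destruct (H _ HP) as (h1&h2&h3&h4&h5&h6&h7&h8); apply h8; apply Hx; exact HP.
Qed.

Lemma union_ideal (A : SkewBrace) (K : nat -> A -> Prop) :
  (forall n, is_ideal A (K n)) ->
  (forall n m x, n <= m -> K n x -> K m x) ->
  is_ideal A (fun x => exists n, K n x).
Proof.
  intros HI Hm. unfold is_ideal.
  repeat split.
  - exists 0. destruct (HI 0) as (h1&h2&h3&h4&h5&h6&h7&h8); exact h1.
  - intros x y [n Hx] [m Hy]. exists (max n m). destruct (HI (max n m)) as (h1&h2&h3&h4&h5&h6&h7&h8).
    apply h2; [apply (Hm n) | apply (Hm m)]; auto; lia.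
  - intros x [n Hx]. exists n. destruct (HI n) as (h1&h2&h3&h4&h5&h6&h7&h8); auto.
  - intros a x [n Hx]. exists n. destruct (HI n) as (h1&h2&h3&h4&h5&h6&h7&h8); auto.
  - intros x y [n Hx] [m Hy]. exists (max n m). destruct (HI (max n m)) as (h1&h2&h3&h4&h5&h6&h7&h8).
    apply h5; [apply (Hm n) | apply (Hm m)]; auto; lia.
  - intros x [n Hx]. exists n. destruct (HI n) as (h1&h2&h3&h4&h5&h6&h7&h8); auto.
  - intros a x [n Hx]. exists n. destruct (HI n) as (h1&h2&h3&h4&h5&h6&h7&h8); auto.
  - intros a x [n Hx]. exists n. destruct (HI n) as (h1&h2&h3&h4&h5&h6&h7&h8); auto.
Qed.

Theorem proposition4p20 (A : SkewBrace) :
  (forall I : A -> Prop, is_ideal A I -> finite_weight A I) ->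
  spec_noetherian A.
Proof.
  intros Hfw C Hcl Hdec.
  set (K := fun n x => forall P, C n P -> P x).
  assert (HK : forall n, is_ideal A (K n)).
  { intro n. apply inter_ideal. intros P HP.
    destruct (Hcl n) as [I [_ HI]]. apply HI in HP.
    destruct HP as [[Hp _] _]. exact Hp. }
  assert (Hsub : forall n m P, n <= m -> C m P -> C n P).
  { intros n m P Hle. induction Hle; auto. }
  assert (Hm : forall n m x, n <= m -> K n x -> K m x).
  { intros n m x Hle Hx P HP. apply Hx. eapply Hsub; eauto. }
  destruct (Hfw _ (union_ideal A K HK Hm)) as [l Hl].
  assert (Hin : forall y, In y l -> exists n, K n y).
  { intros y Hy. apply Hl. intros J HJ HX. apply HX; auto. }
  assert (Hex : exists N, forall y, In y l -> K N y).
  { clear Hl. induction l as [|a l IH].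
    - exists 0. intros y [].
    - destruct IH as [N HN].
      { intros y Hy. apply Hin. right; auto. }
      destruct (Hin a (or_introl eq_refl)) as [n Hn]. exists (max n N).
      intros y [<-|Hy]; [apply (Hm n) | apply (Hm N)]; auto; lia. }
  destruct Hex as [N HN]. exists N. intros n Hn P. split.
  - intros HP. apply Hsub with n; auto.
  - intros HP.
    assert (HKN : forall x, K n x -> K N x).
    { intros x Hx. assert (G := proj1 (Hl x) (ex_intro _ n Hx)).
      apply G; [apply HK|exact HN]. }
    destruct (Hcl n) as [I [HIi HI]]. apply HI.
    destruct (Hcl N) as [I' [_ HI']]. destruct (HI' P) as [HPa _].
    destruct (HPa HP) as [Hpr _]. split; auto.
    intros x Hx. apply (HKN x); [| exact HP].
    intros Q HQ. apply HI in HQ. destruct HQ as [_ HQ]. auto.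
Qed.
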